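(* Let $S_1,\dots,S_n$ be real scores, $\alpha\in(0,1)$, $r=\lceil(1-\alpha)(n+1)\rceil$, and let $m_n\ge 0$ be an integer with $r+m_n\le n$. Let $[a,b]$ be a range with $b\ge \max_{1\le i\le n}S_i$, let $N\ge 1$ be an integer, $\sigma>0$, and $\beta\in(0,1)$. Let $\hat q$ be the output of the Buffered DP Right-Endpoint Binary Search (described in the context) run with these inputs. Then, with probability at least $1-\beta$ (over the Gaussian noise, conditionally on the scores), $\hat q\ge S_{(r+m_n)}$, where $S_{(k)}$ denotes the $k$-th smallest of $S_1,\dots,S_n$.
   Context: Notation: $C_n(t):=\sum_{i=1}^n \mathbb 1\{S_i\le t\}$ is the empirical count function; $\Phi$ is the standard normal CDF. Buffered DP Right-Endpoint Binary Search (Algorithm 2): input scores $S_1,\dots,S_n$, range $[a,b]$, miscoverage level $\alpha$, buffer $m_n$, number of steps $N$, noise scale $\sigma$, failure probability $\beta$. Set $r=\lceil(1-\alpha)(n+1)\rceil$, $\tau=\sigma\Phi^{-1}(1-\beta/N)-1$, $r'=r+m_n+\tau$, $\texttt{left}=a$, $\texttt{right}=b$. For $k=1,\dots,N$: set $\texttt{mid}=(\texttt{left}+\texttt{right})/2$; draw $Z_k\sim\mathcal N(0,\sigma^2)$ independently of everything else (including previous steps) and compute $\tilde C_k=C_n(\texttt{mid})+Z_k$; if $\tilde C_k\ge r'$ set $\texttt{right}=\texttt{mid}$, otherwise set $\texttt{left}=\texttt{mid}$. Output $\hat q=\texttt{right}$. *)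

(* Defs.v *)
From HB Require Import structures.
From mathcomp Require Import all_boot all_order all_algebra.
From mathcomp Require Import all_classical all_reals all_analysis.
Set Implicit Arguments. Unset Strict Implicit. Unset Printing Implicit Defensive.
Import Order.TTheory GRing.Theory Num.Theory.
Local Open Scope classical_set_scope.
Local Open Scope ring_scope.

Section defs.
Context {R : realType}.

Definition Phi (x : R) : R := fine (normal_prob 0 1 `]-oo, x]).

(* its inverse (quantile function): for p in (0,1) this is the unique x
   with Phi x = p, since Phi is continuous and strictly increasing *)
Definition Phi_inv (p : R) : R := sup [set x : R | Phi x <= p].

Definition count_le (n : nat) (S : 'I_n -> R) (t : R) : R :=
  (#|[pred i : 'I_n | S i <= t]|)%:R.

Definition order_stat (n : nat) (S : 'I_n -> R) (k : nat) : R :=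
  nth 0 (sort <=%O [seq S i | i <- enum 'I_n]) k.-1.

Definition bs_step (n : nat) (S : 'I_n -> R) (r' : R) (lr : R * R) (z : R)
  : R * R :=
  let mid := (lr.1 + lr.2) / 2 in
  if r' <= count_le S mid + z then (lr.1, mid) else (mid, lr.2).

(* Algorithm 2 output, given the noise sequence zs = [Z_1; ...; Z_N] *)
Definition bs_output (n : nat) (S : 'I_n -> R) (a b r' : R) (zs : seq R) : R :=
  (foldl (bs_step S r') (a, b) zs).2.

Definition bs_threshold (r : int) (m N : nat) (sigma beta : R) : R :=
  r%:~R + m%:R + (sigma * Phi_inv (1 - beta / N%:R) - 1).

(* Probability that the event E (a predicate on the noise sequence
   [Z_1; ...; Z_N]) holds when Z_1, ..., Z_N are i.i.d. N(0, sigma^2):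
   the N-fold iterated integral against the normal law (= product measure). *)
Fixpoint noise_prob (sigma : R) (N : nat) (E : seq R -> bool) : \bar R :=
  match N with
  | 0 => ((E [::])%:R)%:E
  | N'.+1 => (\int[normal_prob 0 sigma]_z noise_prob sigma N' (fun zs => E (z :: zs)))%E
  end.

End defs.

(* Main.v *)
Require Import Defs.
From HB Require Import structures.
From mathcomp Require Import all_boot all_order all_algebra.
From mathcomp Require Import all_classical all_reals all_analysis.
From mathcomp Require Import zify ring lra measurable_realfun.
Import Order.TTheory GRing.Theory Num.Theory.
Local Open Scope ring_scope.
Local Open Scope classical_set_scope.

Lemma count_le_seq (R : realType) n (S : 'I_n -> R) t :
  count_le S t = (count (fun y => y <= t) (sort <=%O [seq S i | i <- enum 'I_n]))%:R.
Proof.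
rewrite /count_le; congr (_%:R).
rewrite (permP (permEl (perm_sort _ _))) count_map cardE /enum_mem size_filter.
by rewrite count_filter; apply: eq_count => i; rewrite /= !inE andbT.
Qed.

Lemma order_stat_le (R : realType) n (S : 'I_n -> R) (k : nat) t :
  (0 < k <= n)%N -> k%:R <= count_le S t -> order_stat S k <= t.
Proof.
move=> /andP[k0 kn]; rewrite count_le_seq ler_nat /order_stat.
set s := sort _ _.
have ss : sorted <=%O s by apply: sort_sorted; exact: le_total.
have szs : size s = n by rewrite size_sort size_map size_enum_ord.
rewrite leNgt; apply: contraTN => lt; rewrite -ltnNge.
rewrite -(cat_take_drop k.-1 s) count_cat.
have -> : count (fun y => y <= t) (drop k.-1 s) = 0%N.
  apply/eqP; rewrite -leqn0 leqNgt -has_count; apply/hasPn => y /(nthP 0) [j hj <-].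
  rewrite nth_drop -ltNge (lt_le_trans lt)//.
  apply: (sorted_leq_nth le_trans lexx) => //; rewrite ?inE ?szs.
  - lia.
  - by rewrite size_drop szs in hj; lia.
  - lia.
have := count_size (fun y => y <= t) (take k.-1 s).
have h : (k.-1 < n)%N by lia.
rewrite size_take szs h; lia.
Qed.

Lemma bs_inv (R : realType) n (S : 'I_n -> R) (k : nat) (r' t : R) zs lr :
  (0 < k <= n)%N -> k%:R - 1 + t <= r' -> all (fun z => z < t) zs ->
  order_stat S k <= lr.2 -> order_stat S k <= (foldl (bs_step S r') lr zs).2.
Proof.
move=> kn hr; elim: zs lr => [//|z zs IH] lr /= /andP[zt hzs] hl.
apply: IH => //; rewrite /bs_step; case: ifP => //= hc.
apply: order_stat_le => //.
rewrite /count_le in hc *.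
set c := #|_| in hc *.
have : k%:R < c.+1%:R :> R by rewrite -natr1; lra.
by rewrite ltr_nat ltnS ler_nat.
Qed.
Lemma normal_prob_fin (R : realType) (sigma : R) (A : set R) : measurable A ->
  normal_prob 0 sigma A \is a fin_num.
Proof.
move=> mA; rewrite ge0_fin_numE ?measure_ge0//.
have := @probability_le1 _ _ R (normal_prob 0 sigma) A mA. by move=> h; apply: le_lt_trans h _; rewrite ltry.
Qed.

Lemma le_integral_nm d (T : measurableType d) (R : realType)
  (mu : {measure set T -> \bar R}) (f g : T -> \bar R) :
  (forall x, (0 <= f x)%E) -> (forall x, (f x <= g x)%E) ->
  (\int[mu]_x f x <= \int[mu]_x g x)%E.
Proof.
move=> f0 fg.
have g0 x : (0 <= g x)%E by apply: le_trans (fg x).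
rewrite !ge0_integralTE//.
apply: ge_ereal_sup => _ [h /= hf <-].
apply: ereal_sup_ubound; exists h => //= x.
exact: le_trans (hf x) (fg x).
Qed.

Lemma noise_prob_ge0 (R : realType) (sigma : R) N E : (0 <= noise_prob sigma N E)%E.
Proof.
elim: N E => [|N IH] E /=; first by rewrite lee_fin; case: (E [::]).
by apply: integral_ge0 => z _; exact: IH.
Qed.



Lemma noise_lb (R : realType) (sigma t : R) N (E : seq R -> bool) :
  (forall zs, all (fun z => z < t) zs -> E zs) ->
  (((fine (normal_prob 0 sigma `]-oo, t[)) ^+ N)%:E <= noise_prob sigma N E)%E.
Proof.
elim: N E => [|N IH] E hE /=.
  by rewrite expr0 hE.
set q := fine _.
have q0 : 0 <= q by rewrite fine_ge0 ?measure_ge0.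
apply: (@le_trans _ _ (\int[normal_prob 0 sigma]_z ((\1_(`]-oo, t[) z)%:E * (q ^+ N)%:E))%E).
  rewrite ge0_integralZr//; last by rewrite lee_fin exprn_ge0.
  - rewrite integral_indic// setIT; rewrite le_eqVlt; apply/orP; left; apply/eqP.
    rewrite exprSr EFinM muleC; congr (_ * _)%E.
    by rewrite /q fineK// normal_prob_fin.
  - by apply/measurable_EFinP; exact: measurable_indic.
apply: le_integral_nm.
  by move=> z; rewrite mule_ge0// lee_fin ?exprn_ge0.
move=> z; rewrite indicE; case: (boolP (z \in _)) => hz.
  rewrite mul1e; apply: IH => zs hzs; apply: hE => /=; rewrite hzs andbT.
  by move: hz; rewrite inE /= in_itv /=.
by rewrite /= mul0e noise_prob_ge0.
Qed.
Lemma pdf_scale (R : realType) (s y : R) : 0 < s ->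
  normal_pdf 0 s (s * y) * s = normal_pdf 0 1 y.
Proof.
move=> s0.
rewrite !normal_pdfE ?gt_eqF// /normal_peak /normal_fun !subr0 expr1n mul1r.
have sn : s != 0 by rewrite gt_eqF.
rewrite (_ : - (s * y) ^+ 2 / (s ^+ 2 *+ 2) = - y ^+ 2 / 2); last first.
  by rewrite -mulr_natr; field.
rewrite -mulrnAr sqrtrM ?sqr_ge0// sqrtr_sqr gtr0_norm//.
have : Num.sqrt (pi *+ 2) != 0 :> R.
  by rewrite gt_eqF// sqrtr_gt0 mulrn_wgt0// pi_gt0.
move: (Num.sqrt (pi *+ 2)) => a an.
by field; rewrite an sn.
Qed.

Lemma normal_scale (R : realType) (s x : R) : 0 < s ->
  normal_prob 0 s `]-oo, s * x] = normal_prob 0 1 `]-oo, x].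
Proof.
move=> s0; rewrite /normal_prob.
have dF : (fun y : R => s * y)^`()%classic = cst s.
  by apply/funext => y; rewrite derive1E deriveM// derive_id derive_cst scaler0 addr0 /GRing.scale/= mulr1.
rewrite (@increasing_ge0_integration_by_substitutionNy _ (fun y => s * y) (normal_pdf 0 s) x).
- by apply: eq_integral => y _; rewrite dF; congr (_%:E); exact: pdf_scale.
- by move=> a b _ _ ab; rewrite ltr_pM2l.
- by move=> y _; rewrite dF; exact: cvg_cst.
- by rewrite dF; exact: is_cvg_cst.
- by rewrite dF; exact: cvg_cst.
- split.
    by move=> y _; apply: derivableM => //.
  apply: cvg_at_left_filter; exact: mulrl_continuous.
- by apply: gt0_cvgMrNy => //; exact: cvg_id.
- apply/continuous_within_itvNycP; split.
    by move=> y _; exact: continuous_normal_pdf (lt0r_neq0 s0) y.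
  by apply: cvg_at_left_filter; exact: continuous_normal_pdf (lt0r_neq0 s0) _.
- by move=> y _; exact: normal_pdf_ge0.
Qed.


Lemma PhiE (R : realType) (x : R) : (Phi x)%:E = normal_prob 0 1 `]-oo, x].
Proof. by rewrite /Phi fineK// normal_prob_fin. Qed.

Lemma Phi_le (R : realType) (x y : R) : x <= y -> Phi x <= Phi y.
Proof.
move=> xy; rewrite -lee_fin !PhiE le_measure// ?inE//.
by move=> z /=; rewrite !in_itv /= => /le_trans; apply.
Qed.

Lemma Phi_lip (R : realType) (x h : R) : 0 <= h ->
  Phi (x + h) <= Phi x + normal_peak (1 : R) * h.
Proof.
move=> h0; rewrite -lee_fin EFinD !PhiE.
apply: (@le_trans _ _ (normal_prob 0 1 (`]-oo, x] `|` `]x, x + h]))).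
  apply: le_measure; rewrite ?inE//; first exact: measurableU.
  move=> z /=; rewrite !in_itv /= => zx.
  by case: (leP z x) => zx'; [left|right; rewrite zx].
apply: le_trans (measureU2 _ _ _) _ => //.
rewrite leeD2l//.
change (Order.le (normal_prob 0 1 `]x, x + h]) ((normal_peak 1 * h)%:E)); rewrite /normal_prob.
have H : (\int[lebesgue_measure]_(z in `]x, (x + h)%R]) (normal_pdf 0 1 z)%:E <=
    \int[lebesgue_measure]_(z in `]x, (x + h)%R]) (normal_peak (1:R))%:E)%E.
  apply: ge0_le_integral => //.
  - by move=> z _; rewrite lee_fin normal_pdf_ge0.
  - apply/measurable_EFinP; apply: measurable_funTS; exact: measurable_normal_pdf.
  - by move=> z _; rewrite lee_fin normal_pdf_ub// oner_neq0.
apply: le_trans H _.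
rewrite integral_cst//.
have E := lebesgue_measure_itv (Interval (BRight x) (BRight (x + h))).
rewrite [X in (_ * X)%E](_ : _ = (if (BRight x < BRight (x + h))%O then ((x + h)%:E - x%:E)%E else 0%E)); last exact: E.
rewrite /=.
case: ifP => _; last by rewrite mule0 lee_fin mulr_ge0// normal_peak_ge0.
by rewrite -EFinB -EFinM lee_fin addrAC subrr add0r.
Qed.

Lemma normal_oc (R : realType) (s y : R) :
  normal_prob 0 s `]-oo, y[ = normal_prob 0 s `]-oo, y].
Proof.
rewrite /normal_prob integral_itv_bndo_bndc//.
apply/measurable_EFinP; apply: measurable_funTS; exact: measurable_normal_pdf.
Qed.

Lemma Phi_upper (R : realType) (p : R) : p < 1 -> exists x, p < Phi x.
Proof.
move=> p1; apply: contrapT => /forallNP H.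
pose F := fun n : nat => `]-oo, (n%:R : R)].
have cv : (normal_prob 0 1 \o F) @ \oo --> normal_prob 0 1 (\bigcup_n F n).
  apply: nondecreasing_cvg_mu.
  - by move=> i; exact: measurable_itv.
  - by apply: bigcupT_measurable => i; exact: measurable_itv.
  - move=> i j ij; apply/subsetPset => z; rewrite /F /= !in_itv /= => /le_trans; apply.
    by rewrite ler_nat.
have E : \bigcup_n F n = setT.
  apply/seteqP; split => // z _.
  exists (Num.Def.archi_bound `|z|) => //; rewrite /F /= in_itv /=.
  exact/ltW/(le_lt_trans (ler_norm z))/archi_boundP.
rewrite E probability_setT in cv.
have : (lim ((normal_prob 0 1 \o F) @ \oo) <= p%:E)%E.
  apply: lime_le; first by apply/cvg_ex; eexists; exact: cv.
  near=> n; rewrite /= -PhiE lee_fin; have := H n%:R.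
  by move/negP; rewrite -leNgt.
rewrite (cvg_lim _ cv) // lee_fin; lra.
Unshelve. all: end_near.
Qed.

Lemma Phi_inv_spec (R : realType) (p : R) : p < 1 -> p <= Phi (Phi_inv p).
Proof.
move=> p1; have [x1 hx1] := Phi_upper R p p1.
set A := [set x : R | Phi x <= p].
have ubA : has_ubound A.
  exists x1 => x /= hx; rewrite leNgt; apply/negP => x1x.
  have := @Phi_le R _ _ (ltW x1x); move: hx; rewrite /A /=; lra.
set s := Phi_inv p.
have gt y : s < y -> p < Phi y.
  move=> sy; rewrite ltNge; apply/negP => hy.
  have : y <= s by apply: ub_le_sup.
  lra.
have c0 : 0 <= normal_peak (1 : R) := normal_peak_ge0 1.
rewrite leNgt; apply/negP => hs.
pose h := (p - Phi s) / (normal_peak 1 + 1).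
have h0 : 0 < h by apply: divr_gt0; lra.
have := gt (s + h); rewrite ltrDl => /(_ h0) => H1.
have := @Phi_lip R s h (ltW h0).
have : normal_peak 1 * h < p - Phi s.
  rewrite /h mulrA ltr_pdivrMr; last lra.
  nra.
lra.
Qed.

Lemma pow_mono (R : realType) (a b : R) N : 0 <= a <= b -> a ^+ N <= b ^+ N.
Proof.
move=> /andP[a0 ab]; elim: N => [|N IH]; first by rewrite !expr0.
rewrite !exprS; apply: ler_pM => //; exact: exprn_ge0.
Qed.

Lemma bernoulli_ineq (R : realType) (x : R) N : 0 <= x <= 1 -> 1 - N%:R * x <= (1 - x) ^+ N.
Proof.
move=> /andP[x0 x1]; elim: N => [|N IH]; first by rewrite expr0 mul0r subr0.
rewrite exprS -natr1.
have hp : 0 <= (1 - x) ^+ N by apply: exprn_ge0; lra.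
have hN : 0 <= N%:R :> R by [].
nra.
Qed.

Theorem lemma1 (R : realType) (n : nat) (S : 'I_n -> R) (alpha : R)
  (m : nat) (a b : R) (N : nat) (sigma beta : R) :
  0 < alpha < 1 ->
  Num.ceil ((1 - alpha) * n.+1%:R) + m%:Z <= n%:Z ->
  (forall i : 'I_n, S i <= b) ->
  (1 <= N)%N ->
  0 < sigma ->
  0 < beta < 1 ->
  ((1 - beta)%:E <=
   noise_prob sigma N (fun zs => (
     order_stat S (absz (Num.ceil ((1 - alpha) * n.+1%:R) + m%:Z))
     <= bs_output S a b
          (bs_threshold (Num.ceil ((1 - alpha) * n.+1%:R)) m N sigma beta) zs)%R))%E.
Proof.
move=> /andP[a0 a1] hrm hb N1 s0 /andP[b0 b1].
set r := Num.ceil _.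
have r0 : 0 < r.
  rewrite ltNge ceil_le_int /=; rewrite -ltNge; apply: mulr_gt0; first lra.
  by rewrite ltr0n.
set k := absz (r + m%:Z).
have hk : k%:Z = r + m%:Z by rewrite /k gez0_abs//; apply: addr_ge0 => //; exact: ltW.
have kn : (0 < k <= n)%N.
  move: hk r0 hrm; lia.
have hkR : (k%:R : R) = r%:~R + m%:R.
  by rewrite -[k%:R]/((k%:Z)%:~R) hk intrD.
set p := 1 - beta / N%:R.
have NR : 1 <= N%:R :> R by rewrite ler1n.
have bN : beta / N%:R <= beta by rewrite ler_pdivrMr; [nra|lra].
have bN0 : 0 <= beta / N%:R by apply: divr_ge0; lra.
have p1 : p < 1.
  have : 0 < beta / N%:R by apply: divr_gt0; lra.
  rewrite /p; lra.
set t := sigma * Phi_inv p.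
apply: (@le_trans _ _ ((fine (normal_prob 0 sigma `]-oo, t[)) ^+ N)%:E); last first.
  apply: noise_lb => zs hzs; rewrite /bs_output.
  apply: bs_inv hzs _ => //.
    rewrite /bs_threshold -/p -/t hkR; lra.
  apply: order_stat_le => //=.
  rewrite /count_le ler_nat.
  have -> : #|[pred i : 'I_n | S i <= b]| = #|'I_n|.
    by apply: eq_card => i; rewrite !inE hb.
  by rewrite card_ord; case/andP: kn.
rewrite lee_fin.
have hq : p <= fine (normal_prob 0 sigma `]-oo, t[).
  by rewrite /t normal_oc normal_scale// -/(Phi (Phi_inv p)); exact: Phi_inv_spec.
have hp0 : 0 <= p by rewrite /p; lra.
have h1 : p ^+ N <= fine (normal_prob 0 sigma `]-oo, t[) ^+ N.
  by apply: pow_mono; rewrite hp0 hq.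
have h2 : 1 - N%:R * (beta / N%:R) <= p ^+ N.
  by apply: bernoulli_ineq; rewrite bN0 /=; lra.
have e : N%:R * (beta / N%:R) = beta.
  by field; rewrite pnatr_eq0 -lt0n.
rewrite e in h2; lra.
Qed.
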